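(* Consider the continuous-time LPV system $$\dot x(t)=A(\rho)x(t)+B(\rho)u(t),\qquad y(t)=C(\rho)x(t),$$ with $x\in\mathbb{R}^n$, $u\in\mathbb{R}^m$, $y\in\mathbb{R}^p$, time-varying parameter $\rho(t)\in\Omega\subset\mathbb{R}^r$, and $A,B,C$ polynomial or rational in $\rho$. Assume it is given in the differential-algebraic representation (DAR) $$\dot x=A_1x+A_2\pi+A_3u,\qquad y=C_1x+C_2\pi,\qquad 0=\Upsilon_1(\rho)x+\Upsilon_2(\rho)\pi+\Upsilon_3(\rho)u,$$ as described in the context, with vertex matrices $\Upsilon_{1_i},\Upsilon_{2_i},\Upsilon_{3_i}$, $i=1,\dots,N$, and set $C_{d_i}=\begin{bmatrix}\Upsilon_{1_i}&\Upsilon_{2_i}&\Upsilon_{3_i}\end{bmatrix}$. Let a scalar $\beta$ be given. Suppose there exist symmetric matrices $P\succ0$ ($n\times n$), $H_i\succ0$ ($n\times n$), $R\succ0$ ($m\times m$), $Q_i$ ($p\times p$), matrices $S_i\in\mathbb{R}^{p\times m}$ ($i=1,\dots,N$), and a matrix $L\in\mathbb{R}^{(n+n_\pi+m)\times n_\pi}$ such that, for all $i=1,\dots,N$, $$Y_i+LC_{d_i}+C_{d_i}^\top L^\top\prec0,\qquad X_{d_i}+L_sC_{s_i}+C_{s_i}^\top L_s^\top\prec0,$$ where $$Y_i=\begin{bmatrix}PA_1+A_1^\top P-C_1^\top Q_iC_1+H_i&\star&\star\\ (PA_2-C_1^\top Q_iC_2)^\top&-C_2^\top Q_iC_2&\star\\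 (PA_3-C_1^\top S_i)^\top&-S_i^\top C_2&-R\end{bmatrix},\quad X_{d_i}=\begin{bmatrix}Q_i&S_i\\ S_i^\top&R\end{bmatrix},$$ $C_{s_i}=\begin{bmatrix}S_i^\top&R\end{bmatrix}$, and $L_s\in\mathbb{R}^{(p+m)\times m}$ is defined by $L_s^\top=\begin{bmatrix}\beta\mathbf{1}_{m\times p}&-I_m\end{bmatrix}$. Then the system is robust strictly QSR-dissipative for all $\rho(t)\in\Omega$ (with storage function $V(x)=x^\top Px$, $T(x,\rho)=x^\top H(\rho)x$, $H(\rho)=\sum_i\alpha_iH_i$, and supply-rate matrices $Q(\rho)=\sum_i\alpha_iQ_i$, $S(\rho)=\sum_i\alpha_iS_i$, $R$), and the gain-scheduled static output feedback $$u=K(\rho)y,\qquad K(\rho)=\sum_{i=1}^N\alpha_i(\rho)K_i,\qquad K_i=-R^{-1}S_i^\top,$$ asymptotically stabilizes the system around the origin for all $\rho\in\Omega$.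
   Context: Standing assumption: the parameter vector $\rho(t)\in\mathbb{R}^r$ is bounded and lies in a polytope $\Omega$ with $N=2^r$ vertices; every $\rho\in\Omega$ is written as a convex combination of the vertices with weights $\alpha(\rho)=(\alpha_1,\dots,\alpha_N)$, $\alpha_i\ge0$, $\sum_i\alpha_i=1$. DAR: $\pi=\pi(x,\rho,u)\in\mathbb{R}^{n_\pi}$ is an auxiliary vector collecting the terms depending nonlinearly on $\rho$; $A_1\in\mathbb{R}^{n\times n}$, $A_2\in\mathbb{R}^{n\times n_\pi}$, $A_3\in\mathbb{R}^{n\times m}$, $C_1\in\mathbb{R}^{p\times n}$, $C_2\in\mathbb{R}^{p\times n_\pi}$ are constant; $\Upsilon_1(\rho)\in\mathbb{R}^{n_\pi\times n}$, $\Upsilon_2(\rho)\in\mathbb{R}^{n_\pi\times n_\pi}$, $\Upsilon_3(\rho)\in\mathbb{R}^{n_\pi\times m}$ are affine in $\rho$, with $\Upsilon_2(\rho)$ invertible, and the DAR is an exact representation of the LPV system (eliminating $\pi$ via the algebraic equation recovers $A(\rho),B(\rho),C(\rho)$). Being affine, $\Upsilon_k(\rho)=\sum_{i=1}^N\alpha_i\Upsilon_{k_i}$, where $\Upsilon_{k_i}$ is the value at the $i$-th vertex. Notation: $\star$ denotes blocks determined by symmetry; $\mathbf{1}$ is an all-ones matrix. Robust strict QSR-dissipativity: with $V(x)=x^\top Px$, $T(x,\rho)=x^\top H(\rho)x$, the system is robust strictly QSR-dissipative if for all $\rho\in\Omega$ and all $(x,\pi,u)$ satisfying the DAR algebraic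 constraint, $t_d(x,u,\rho):=\nabla V^\top[A_1x+A_2\pi+A_3u]+x^\top H(\rho)x-y^\top Q(\rho)y-2y^\top S(\rho)u-u^\top Ru\le0$, where $y=C_1x+C_2\pi$. *)

(* Defs.v *)
From HB Require Import structures.
From mathcomp Require Import all_boot all_order all_algebra.
From mathcomp Require Import all_classical all_reals all_analysis.
Set Implicit Arguments. Unset Strict Implicit. Unset Printing Implicit Defensive.
Import Order.TTheory GRing.Theory Num.Theory.
Import numFieldNormedType.Exports.
Local Open Scope classical_set_scope.
Local Open Scope ring_scope.

Definition qf {R : realType} {k l : nat} (u : 'cV[R]_k) (M : 'M[R]_(k, l))
  (v : 'cV[R]_l) : R := (u^T *m M *m v) 0 0.

Definition posdef {R : realType} {k : nat} (M : 'M[R]_k) : Prop :=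
  M^T = M /\ forall v : 'cV[R]_k, v != 0 -> 0 < qf v M v.
Definition negdef {R : realType} {k : nat} (M : 'M[R]_k) : Prop :=
  M^T = M /\ forall v : 'cV[R]_k, v != 0 -> qf v M v < 0.

Definition ccomb {R : realType} {N k l : nat} (a : 'I_N -> R)
  (M : 'I_N -> 'M[R]_(k, l)) : 'M[R]_(k, l) := \sum_(i < N) a i *: M i.

Definition affine_in {R : realType} {r k l : nat} (F : 'rV[R]_r -> 'M[R]_(k, l))
  : Prop :=
  exists (M0 : 'M[R]_(k, l)) (M : 'I_r -> 'M[R]_(k, l)),
    forall rho, F rho = M0 + \sum_(j < r) rho 0 j *: M j.

(* Robust strict QSR-dissipativity of the DAR, with V(x) = x^T P x,
   T(x,rho) = x^T H(rho) x; grad V = (P + P^T) x. *)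
Definition robust_strict_QSR_dissipative {R : realType} {r n npi m p : nat}
  (Omega : set 'rV[R]_r)
  (A1 : 'M[R]_n) (A2 : 'M[R]_(n, npi)) (A3 : 'M[R]_(n, m))
  (C1 : 'M[R]_(p, n)) (C2 : 'M[R]_(p, npi))
  (U1 : 'rV[R]_r -> 'M[R]_(npi, n)) (U2 : 'rV[R]_r -> 'M[R]_npi)
  (U3 : 'rV[R]_r -> 'M[R]_(npi, m))
  (P : 'M[R]_n) (H : 'rV[R]_r -> 'M[R]_n) (Q : 'rV[R]_r -> 'M[R]_p)
  (S : 'rV[R]_r -> 'M[R]_(p, m)) (Rm : 'M[R]_m) : Prop :=
  forall rho, Omega rho ->
  forall (x : 'cV[R]_n) (pi : 'cV[R]_npi) (u : 'cV[R]_m),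
    U1 rho *m x + U2 rho *m pi + U3 rho *m u = 0 ->
    let y := C1 *m x + C2 *m pi in
    qf ((P + P^T) *m x) 1%:M (A1 *m x + A2 *m pi + A3 *m u)
    + qf x (H rho) x - qf y (Q rho) y - 2 * qf y (S rho) u - qf u Rm u <= 0.

Definition lpv_solution {R : realType} {r n : nat} (Omega : set 'rV[R]_r)
  (M : 'rV[R]_r -> 'M[R]_n) (rho : R -> 'rV[R]_r) (x : R -> 'cV[R]_n) : Prop :=
  (forall t : R, 0 <= t -> Omega (rho t)) /\
  {within [set t : R | 0 <= t], continuous x} /\
  (forall t : R, 0 < t -> is_derive t (1 : R) x (M (rho t) *m x t)).

Definition lpv_asymptotically_stable {R : realType} {r n : nat}
  (Omega : set 'rV[R]_r) (M : 'rV[R]_r -> 'M[R]_n) : Prop :=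
  (forall e : R, 0 < e -> exists2 d : R, 0 < d &
     forall rho x, lpv_solution Omega M rho x -> `|x 0| < d ->
       forall t : R, 0 <= t -> `|x t| < e) /\
  (forall rho x, lpv_solution Omega M rho x -> x t @[t --> +oo] --> (0 : 'cV[R]_n)).

(* Main.v *)
Require Import Defs.
From HB Require Import structures.
From mathcomp Require Import all_boot all_order all_algebra.
From mathcomp Require Import all_classical all_reals all_analysis.
From mathcomp Require Import ring lra.
Set Implicit Arguments. Unset Strict Implicit. Unset Printing Implicit Defensive.
Import Order.TTheory GRing.Theory Num.Theory.
Import numFieldNormedType.Exports.
Local Open Scope classical_set_scope.
Local Open Scope ring_scope.

Section TR.
Context {R : realType}.
Lemma trN m n (A : 'M[R]_(m, n)) : (- A)^T = - A^T.
Proof. by apply/matrixP => i j; rewrite !mxE. Qed.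
Lemma trD m n (A B : 'M[R]_(m, n)) : (A + B)^T = A^T + B^T.
Proof. by apply/matrixP => i j; rewrite !mxE. Qed.
Lemma trB m n (A B : 'M[R]_(m, n)) : (A - B)^T = A^T - B^T.
Proof. by apply/matrixP => i j; rewrite !mxE. Qed.
Lemma trZ m n a (A : 'M[R]_(m, n)) : (a *: A)^T = a *: A^T.
Proof. by apply/matrixP => i j; rewrite !mxE. Qed.
End TR.

Section IP.
Context {R : realType}.
Definition ip {k : nat} (u v : 'cV[R]_k) : R := (u^T *m v) 0 0.

Lemma qfE k l (u : 'cV[R]_k) (M : 'M[R]_(k,l)) v : qf u M v = ip u (M *m v).
Proof. by rewrite /qf /ip mulmxA. Qed.

Lemma ipC k (u v : 'cV[R]_k) : ip u v = ip v u.
Proof. by rewrite /ip -[v^T *m u]trmxK trmx_mul trmxK [in RHS]mxE. Qed.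
Lemma ip_mull k l (M : 'M[R]_(k,l)) u v : ip (M *m u) v = ip u (M^T *m v).
Proof. by rewrite /ip trmx_mul mulmxA. Qed.
Lemma ip_trr k l (M : 'M[R]_(l,k)) u v : ip u (M^T *m v) = ip (M *m u) v.
Proof. by rewrite ip_mull. Qed.
Lemma ipDl k (u w v : 'cV[R]_k) : ip (u + w) v = ip u v + ip w v.
Proof. by rewrite /ip trD mulmxDl mxE. Qed.
Lemma ipDr k (u w v : 'cV[R]_k) : ip v (u + w) = ip v u + ip v w.
Proof. by rewrite /ip mulmxDr mxE. Qed.
Lemma ipNl k (u v : 'cV[R]_k) : ip (- u) v = - ip u v.
Proof. by rewrite /ip trN mulNmx mxE. Qed.
Lemma ipNr k (u v : 'cV[R]_k) : ip v (- u) = - ip v u.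
Proof. by rewrite /ip mulmxN mxE. Qed.
Lemma ipZl k a (u v : 'cV[R]_k) : ip (a *: u) v = a * ip u v.
Proof. by rewrite /ip trZ -scalemxAl mxE. Qed.
Lemma ipZr k a (u v : 'cV[R]_k) : ip v (a *: u) = a * ip v u.
Proof. by rewrite /ip -scalemxAr mxE. Qed.
Lemma ip0r k (v : 'cV[R]_k) : ip v 0 = 0.
Proof. by rewrite /ip mulmx0 mxE. Qed.
Lemma ip0l k (v : 'cV[R]_k) : ip 0 v = 0.
Proof. by rewrite ipC ip0r. Qed.
Lemma ip_sumr k I (r : seq I) (F : I -> 'cV[R]_k) v :
  ip v (\sum_(i <- r) F i) = \sum_(i <- r) ip v (F i).
Proof. by rewrite /ip mulmx_sumr summxE. Qed.
Lemma ip_col k l (a c : 'cV[R]_k) (b d : 'cV[R]_l) :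
  ip (col_mx a b) (col_mx c d) = ip a c + ip b d.
Proof. by rewrite /ip tr_col_mx mul_row_col mxE. Qed.
End IP.

Lemma Y_expand (R : realType) (n npi m p : nat) (P Hm : 'M[R]_n) (A1 : 'M[R]_n) (A2 : 'M[R]_(n, npi)) (A3 : 'M[R]_(n, m))
  (C1 : 'M[R]_(p, n)) (C2 : 'M[R]_(p, npi)) (Qm : 'M[R]_p) (Sm : 'M[R]_(p, m)) (Rm : 'M[R]_m)
  x pi u : P^T = P -> Qm^T = Qm ->
  let Y11 := P *m A1 + A1^T *m P - C1^T *m Qm *m C1 + Hm in
  let Y21 := (P *m A2 - C1^T *m Qm *m C2)^T in
  let Y31 := (P *m A3 - C1^T *m Sm)^T in
  let Y22 := - (C2^T *m Qm *m C2) in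
  let Y32 := - (Sm^T *m C2) in
  let Y33 := - Rm in
  let Y := block_mx Y11 (row_mx Y21^T Y31^T)
                    (col_mx Y21 Y31) (block_mx Y22 Y32^T Y32 Y33) in
  let y := C1 *m x + C2 *m pi in
  ip (col_mx x (col_mx pi u)) (Y *m col_mx x (col_mx pi u)) =
  qf ((P + P^T) *m x) 1%:M (A1 *m x + A2 *m pi + A3 *m u)
    + qf x Hm x - qf y Qm y - 2 * qf y Sm u - qf u Rm u.
Proof.
move=> hP hQ Y11 Y21 Y31 Y22 Y32 Y33 Y y.
rewrite /Y mul_block_col !mul_row_col mul_block_col !ip_col mul_col_mx add_col_mx ?ip_col.
rewrite !qfE mul1mx /y hP.
rewrite /Y11 /Y21 /Y31 /Y22 /Y32 /Y33 ?trmxK.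
rewrite ?trN ?trB ?trmx_mul ?trmxK.
rewrite !(mulmxDl, mulmxBl, mulmxDr, mulmxBr, mulNmx, mulmxN).
rewrite -!mulmxA.
rewrite !(ipDl, ipDr, ipNl, ipNr).
have hx (w : 'cV[R]_n) : ip x (P *m w) = ip (P *m x) w by rewrite ip_mull hP.
rewrite hP hQ !hx !ip_trr.
rewrite [ip (A1 *m x) _]ipC [ip (A2 *m pi) _]ipC [ip (A3 *m u) _]ipC.
rewrite [ip (Sm *m u) (C1 *m x)]ipC [ip (Sm *m u) (C2 *m pi)]ipC.

ring.
Qed.

Lemma LC_expand (R : realType) k l (Y : 'M[R]_k) (L : 'M[R]_(k, l)) (C : 'M[R]_(l, k)) z :
  ip z ((Y + L *m C + C^T *m L^T) *m z) = ip z (Y *m z) + 2 * ip (L^T *m z) (C *m z).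
Proof.
rewrite !mulmxDl !ipDr -!mulmxA ip_trr -ip_mull.
rewrite [ip (L *m _) z]ipC.
have h : ip z (L *m (C *m z)) = ip (L^T *m z) (C *m z) by rewrite ip_mull trmxK.
rewrite h; ring.
Qed.

Lemma X_expand (R : realType) (m p : nat) (Qm : 'M[R]_p) (Sm : 'M[R]_(p, m)) (Rm : 'M[R]_m) beta y w :
  let Xd := block_mx Qm Sm Sm^T Rm in
  let Cs := row_mx Sm^T Rm in
  let Ls := (row_mx (const_mx beta : 'M[R]_(m, p)) (- 1%:M))^T in
  w = (const_mx beta : 'M[R]_(m, p)) *m y ->
  ip (col_mx y w) ((Xd + Ls *m Cs + Cs^T *m Ls^T) *m col_mx y w)
  = qf y Qm y + 2 * qf y Sm w + qf w Rm w.
Proof.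
move=> Xd Cs Ls hw.
rewrite LC_expand trmxK mul_row_col mulNmx mul1mx -hw subrr ip0l mulr0 addr0.
rewrite /Xd mul_block_col ip_col !ipDr !qfE ip_trr [ip (Sm *m w) y]ipC; ring.
Qed.

Lemma qf_ccomb (R : realType) N k l (a : 'I_N -> R) (M : 'I_N -> 'M[R]_(k, l)) u v :
  qf u (ccomb a M) v = \sum_i a i * qf u (M i) v.
Proof.
rewrite /ccomb qfE mulmx_suml ip_sumr; apply: eq_bigr => i _.
by rewrite -scalemxAl ipZr qfE.
Qed.

Lemma ccomb_affine (R : realType) r N k l (F : 'rV[R]_r -> 'M[R]_(k, l)) (a : 'I_N -> R) vtx rho :
  affine_in F -> \sum_i a i = 1 -> rho = ccomb a vtx ->
  ccomb a (fun i => F (vtx i)) = F rho.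
Proof.
move=> [M0 [M hF]] ha ->; rewrite /ccomb hF.
under eq_bigr do rewrite hF scalerDr scaler_sumr.
rewrite big_split /= -scaler_suml ha scale1r; congr (_ + _).
rewrite exchange_big /=; apply: eq_bigr => j _.
rewrite summxE scaler_suml; apply: eq_bigr => i _.
by rewrite scalerA mxE.
Qed.

Lemma negdef_le (R : realType) k (M : 'M[R]_k) v : negdef M -> qf v M v <= 0.
Proof.
move=> [_ h]; have [->|nz] := eqVneq v 0; last exact/ltW/h.
by rewrite qfE ip0l.
Qed.

Lemma posdef_ge (R : realType) k (M : 'M[R]_k) v : posdef M -> 0 <= qf v M v.
Proof.
move=> [_ h]; have [->|nz] := eqVneq v 0; last exact/ltW/h.
by rewrite qfE ip0l.
Qed.


Lemma dissip (R : realType) (r n npi m p : nat)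
  (Omega : set 'rV[R]_r) (vtx : 'I_(2 ^ r) -> 'rV[R]_r)
  (alpha : 'rV[R]_r -> 'I_(2 ^ r) -> R)
  (Halpha : forall rho, Omega rho ->
     (forall i, 0 <= alpha rho i) /\ \sum_i alpha rho i = 1 /\
     rho = ccomb (alpha rho) vtx)
  (A1 : 'M[R]_n) (A2 : 'M[R]_(n, npi)) (A3 : 'M[R]_(n, m))
  (C1 : 'M[R]_(p, n)) (C2 : 'M[R]_(p, npi))
  (U1 : 'rV[R]_r -> 'M[R]_(npi, n)) (U2 : 'rV[R]_r -> 'M[R]_npi)
  (U3 : 'rV[R]_r -> 'M[R]_(npi, m))
  (hU1 : affine_in U1) (hU2 : affine_in U2) (hU3 : affine_in U3)
  (P : 'M[R]_n) (H : 'I_(2 ^ r) -> 'M[R]_n) (Rm : 'M[R]_m)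
  (Q : 'I_(2 ^ r) -> 'M[R]_p) (S : 'I_(2 ^ r) -> 'M[R]_(p, m))
  (L : 'M[R]_(n + (npi + m), npi))
  (hPs : P^T = P)
  (hQ : forall i, (Q i)^T = Q i)
  (hLMI1 : forall i,
     let Cd := row_mx (U1 (vtx i)) (row_mx (U2 (vtx i)) (U3 (vtx i))) in
     let Y11 := P *m A1 + A1^T *m P - C1^T *m Q i *m C1 + H i in
     let Y21 := (P *m A2 - C1^T *m Q i *m C2)^T in
     let Y31 := (P *m A3 - C1^T *m S i)^T in
     let Y22 := - (C2^T *m Q i *m C2) in
     let Y32 := - ((S i)^T *m C2) in
     let Y33 := - Rm in
     let Y := block_mx Y11 (row_mx Y21^T Y31^T)
                       (col_mx Y21 Y31) (block_mx Y22 Y32^T Y32 Y33) in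
     negdef (Y + L *m Cd + Cd^T *m L^T)) :
  robust_strict_QSR_dissipative Omega A1 A2 A3 C1 C2 U1 U2 U3 P
    (fun rho => ccomb (alpha rho) H) (fun rho => ccomb (alpha rho) Q)
    (fun rho => ccomb (alpha rho) S) Rm.
Proof.
move=> rho hrho x pi u hcon; cbv zeta; set y := C1 *m x + C2 *m pi.
have [ha [hs hr]] := Halpha rho hrho.
set xi := col_mx x (col_mx pi u).
pose E i := qf ((P + P^T) *m x) 1%:M (A1 *m x + A2 *m pi + A3 *m u)
    + qf x (H i) x - qf y (Q i) y - 2 * qf y (S i) u - qf u Rm u.
pose Cx i := U1 (vtx i) *m x + (U2 (vtx i) *m pi + U3 (vtx i) *m u).
have hi i : E i + 2 * ip (L^T *m xi) (Cx i) <= 0.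
  have := negdef_le xi (hLMI1 i); cbv zeta.
  rewrite qfE LC_expand.
  have := @Y_expand R n npi m p P (H i) A1 A2 A3 C1 C2 (Q i) (S i) Rm x pi u hPs (hQ i).
  cbv zeta => ->.
  by rewrite /xi !mul_row_col.
have hC : \sum_i alpha rho i * ip (L^T *m xi) (Cx i) = 0.
  rewrite -[RHS](ip0r (L^T *m xi)) -hcon.
  rewrite -(ccomb_affine hU1 hs hr) -(ccomb_affine hU2 hs hr) -(ccomb_affine hU3 hs hr).
  rewrite /ccomb !mulmx_suml -!big_split /= ip_sumr; apply: eq_bigr => i _.
  by rewrite -!scalemxAl -!scalerDr ipZr /Cx addrA.
have hE : \sum_i alpha rho i * (E i + 2 * ip (L^T *m xi) (Cx i)) <= 0.
  rewrite sumr_le0 // => i _; rewrite mulr_ge0_le0 //.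
apply: le_trans hE.
rewrite le_eqVlt; apply/orP; left; apply/eqP.
under eq_bigr do rewrite mulrDr mulrCA.
rewrite big_split /= -mulr_sumr hC mulr0 addr0 /E.
rewrite !qf_ccomb.
set c := qf ((P + P^T) *m x) 1%:M _; set r0 := qf u Rm u.
under [RHS]eq_bigr => i _ do rewrite mulrBr mulrBr mulrBr mulrDr mulrCA [alpha rho i * r0]mulrC [alpha rho i * c]mulrC.
rewrite !sumrB big_split /= -!mulr_sumr hs !mulr1.
done.
Qed.


Lemma posdef_unit (R : realType) k (M : 'M[R]_k) : posdef M -> M \in unitmx.
Proof.
move=> [hs hp]; rewrite unitmxE unitfE; apply/negP => /det0P [v nz hv].
have : 0 < qf v^T M v^T by apply: hp; rewrite trmx_eq0.
rewrite qfE -hs -trmx_mul hv.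
have -> : (0 : 'M[R]_(1, k))^T = 0 by apply/matrixP => i j; rewrite !mxE.
by rewrite ip0r ltxx.
Qed.

Lemma supply_neg (R : realType) N (m p : nat) (a : 'I_N -> R)
  (ha : forall i, 0 <= a i) (hs : \sum_i a i = 1) (beta : R)
  (Rm : 'M[R]_m) (Q : 'I_N -> 'M[R]_p) (S : 'I_N -> 'M[R]_(p, m))
  (hR : posdef Rm)
  (hLMI2 : forall i,
     let Xd := block_mx (Q i) (S i) (S i)^T Rm in
     let Cs := row_mx (S i)^T Rm in
     let Ls := (row_mx (const_mx beta : 'M[R]_(m, p)) (- 1%:M))^T in
     negdef (Xd + Ls *m Cs + Cs^T *m Ls^T)) (y : 'cV[R]_p) :
  qf y (ccomb a Q) y + 2 * qf y (ccomb a S) (ccomb a (fun i => - (invmx Rm *m (S i)^T)) *m y)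
   + qf (ccomb a (fun i => - (invmx Rm *m (S i)^T)) *m y) Rm (ccomb a (fun i => - (invmx Rm *m (S i)^T)) *m y) <= 0.
Proof.
set u := ccomb a _ *m y.
set w := (const_mx beta : 'M[R]_(m, p)) *m y.
pose f v := qf y (ccomb a Q) y + 2 * qf y (ccomb a S) v + qf v Rm v.
have fw : f w <= 0.
  have hi i : qf y (Q i) y + 2 * qf y (S i) w + qf w Rm w <= 0.
    have := negdef_le (col_mx y w) (hLMI2 i); cbv zeta.
    by rewrite qfE X_expand.
  have : \sum_i a i * (qf y (Q i) y + 2 * qf y (S i) w + qf w Rm w) <= 0.
    by rewrite sumr_le0 // => i _; rewrite mulr_ge0_le0.
  apply: le_trans; rewrite /f !qf_ccomb.
  under [X in _ <= X]eq_bigr => i _ do rewrite mulrDr mulrDr mulrCA [a i * qf w Rm w]mulrC.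
  by rewrite !big_split /= -!mulr_sumr hs mulr1.
have hRs : Rm^T = Rm by case: hR.
set b := (ccomb a S)^T *m y.
have hu : Rm *m u = - b.
  rewrite /u /b.
  have -> : (ccomb a S)^T = ccomb a (fun i => (S i)^T).
    by apply/matrixP => i j; rewrite /ccomb !mxE !summxE; apply: eq_bigr => k _; rewrite !mxE.
  rewrite /ccomb !mulmx_suml mulmx_sumr -sumrN; apply: eq_bigr => i _.
  rewrite scalerN mulNmx mulmxN -!scalemxAl -scalemxAr !mulmxA mulmxV ?mul1mx //.
  exact: posdef_unit.
have key : f w - f u = qf (w - u) Rm (w - u).
  rewrite /f !qfE.
  have hb v : ip y (ccomb a S *m v) = ip b v by rewrite /b ip_mull trmxK.
  have e1 : ip u (Rm *m w) = - ip b w by rewrite -{1}hRs ip_trr hu ipNl.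
  have e2 : ip u (Rm *m u) = - ip b u by rewrite hu ipNr ipC.
  have e3 : ip w (Rm *m u) = - ip b w by rewrite hu ipNr ipC.
  rewrite !hb mulmxBr !(ipDl, ipDr, ipNl, ipNr) e1 e2 e3; ring.
have := posdef_ge (w - u) hR; rewrite -key => h.
rewrite -/(f u); apply: le_trans fw; lra.
Qed.


Lemma trnorm_le (R : realType) m n (A : 'M[R]_(m,n)) : `|A^T| <= `|A|.
Proof.
rewrite [leLHS]/Num.Def.normr /= mx_normrE; apply: bigmax_le => // -[i j] _ /=.
rewrite mxE [leRHS]/Num.Def.normr /= mx_normrE.
exact: (le_bigmax _ _ (j, i)).
Qed.

Lemma trnorm (R : realType) m n (A : 'M[R]_(m,n)) : `|A^T| = `|A|.
Proof. by apply/le_anti; rewrite trnorm_le /= -{1}(trmxK A) trnorm_le. Qed.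

Lemma qf_sum (R : realType) k l (u : 'cV[R]_k) (M : 'M[R]_(k,l)) v :
  qf u M v = \sum_j \sum_i u i 0 * M i j * v j 0.
Proof.
rewrite /qf mxE; apply: eq_bigr => j _; rewrite mxE big_distrl /=.
by apply: eq_bigr => i _; rewrite mxE.
Qed.

Lemma cont_sum {T : topologicalType} {R : realType} k (F : 'I_k -> T -> R) x :
  (forall i, {for x, continuous (F i)}) -> {for x, continuous (fun y => \sum_i F i y)}.
Proof.
move=> h; rewrite -fct_sumE; elim/big_ind: _ => //.
- exact: cst_continuous.
- by move=> f g cf cg; apply: continuousD.
Qed.

Lemma qf_cont (R : realType) k (M : 'M[R]_k) : continuous (fun w : 'rV[R]_k => qf w^T M w^T).
Proof.
move=> w0.
have -> : (fun w : 'rV[R]_k => qf w^T M w^T) = (fun w => \sum_j \sum_i (w 0 i * M i j) * w 0 j).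
  by apply/funext => w; rewrite qf_sum; apply: eq_bigr => j _; apply: eq_bigr => i _; rewrite !mxE.
apply: cont_sum => j; apply: cont_sum => i.
apply: (continuousM (s := fun w : 'rV[R]_k => w 0 i * M i j) (t := fun w : 'rV[R]_k => w 0 j)); last exact: coord_continuous.
apply: (continuousM (s := fun w : 'rV[R]_k => w 0 i) (t := fun _ => M i j)); first exact: coord_continuous.
exact: cst_continuous.
Qed.

Lemma qf_scale (R : realType) k (M : 'M[R]_k) (a : R) v : qf (a *: v) M (a *: v) = a ^+ 2 * qf v M v.
Proof. by rewrite !qfE -scalemxAr ipZl ipZr mulrA expr2. Qed.

Lemma sphere_compact (R : realType) k : compact [set w : 'rV[R]_k | `|w| = 1].
Proof.
apply: bounded_closed_compact.
  exists 1; split; first exact: num_real.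
  by move=> M hM w /= ->; rewrite ltW.
have h := @preimage_closed _ _ (Num.norm : 'rV[R]_k -> R) [set x : R | x = 1]
  (fun x _ => @norm_continuous _ _ x) (closed_eq (y := (1:R))).
exact: h.
Qed.

Lemma qf_bounds (R : realType) k (M : 'M[R]_k) :
  exists2 c, 0 < c & exists2 C, 0 < C & forall v : 'cV[R]_k,
    (posdef M -> c * `|v| ^+ 2 <= qf v M v) /\ qf v M v <= C * `|v| ^+ 2.
Proof.
have [hex|hno] := pselect (exists v : 'cV[R]_k, v != 0); last first.
  exists 1 => //; exists 1 => // v.
  have -> : v = 0 by case: (eqVneq v 0) => // nz; case: hno; exists v.
  by rewrite normr0 expr0n /= mulr0 qfE ip0l.
case: hex => v0 nz0.
have ne : [set w : 'rV[R]_k | `|w| = 1] !=set0.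
  exists (`|v0|^-1 *: v0)^T => /=.
  by rewrite trnorm normrZ normrV ?unitfE ?normr_eq0 // normr_id mulVf // normr_eq0.
have cf : {within [set w : 'rV[R]_k | `|w| = 1], continuous (fun w : 'rV[R]_k => qf w^T M w^T)}.
  by apply: continuous_subspaceT; exact: qf_cont.
have [wm hwm minf] := compact_EVT_min ne (@sphere_compact R k) cf.
have [wM hwM maxf] := compact_EVT_max ne (@sphere_compact R k) cf.
set c := qf wm^T M wm^T; set C := qf wM^T M wM^T.
have key v : v != 0 -> qf v M v = `|v| ^+ 2 * qf (`|v|^-1 *: v) M (`|v|^-1 *: v).
  by move=> nz; rewrite qf_scale mulrA -exprMn mulfV ?normr_eq0 // expr1n mul1r.
have insph v : v != 0 -> (`|v|^-1 *: v)^T \in [set w : 'rV[R]_k | `|w| = 1].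
  move=> nz; rewrite inE /= trnorm normrZ normrV ?unitfE ?normr_eq0 // normr_id mulVf // normr_eq0.
  done.
exists (if `[< posdef M >] then c else 1).
  case: ifPn => // /asboolP [_ hp]; apply: hp.
  rewrite trmx_eq0; apply/negP => /eqP h0.
  by move: hwm; rewrite inE /= h0 normr0 => /esym/eqP; rewrite oner_eq0.
exists (Num.max C 1); first by rewrite lt_max ltr01 orbT.
move=> v; have [->|nz] := eqVneq v 0.
  by rewrite normr0 expr0n /= !mulr0 qfE ip0l; split.
split.
  move=> hpd; rewrite (asboolT hpd) key // mulrC ler_wpM2l ?exprn_ge0 //.
  by have := minf _ (insph v nz); rewrite trmxK.
rewrite key // [leRHS]mulrC ler_wpM2l ?exprn_ge0 //.
have := maxf _ (insph v nz); rewrite trmxK => h; apply: le_trans h _.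
by rewrite le_max lexx.
Qed.


Lemma entry_derive (R : realType) k l (f : R -> 'M[R]_(k, l)) t df i j :
  is_derive t (1:R) f df -> is_derive t (1:R) (fun s => f s i j) (df i j).
Proof.
move=> [hd hD]; apply: DeriveDef.
  by move/derivable_mxP: hd; apply.
by move: hD; rewrite derive_mx // => <-; rewrite mxE.
Qed.

Lemma qf_derive (R : realType) k (f : R -> 'cV[R]_k) t df (M : 'M[R]_k) :
  is_derive t (1:R) f df ->
  is_derive t (1:R) (fun s => qf (f s) M (f s)) (qf df M (f t) + qf (f t) M df).
Proof.
move=> hf.
have -> : (fun s => qf (f s) M (f s)) =
    \sum_j (\sum_i (fun s => f s i 0 * M i j * f s j 0)).
  apply/funext => s; rewrite qf_sum fct_sumE; apply: eq_bigr => j _.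
  by rewrite fct_sumE.
apply: is_derive_eq.
  apply: is_derive_sum => j; apply: is_derive_sum => i.
  apply: is_deriveM; last exact: entry_derive.
  apply: is_deriveM; try exact: entry_derive.
rewrite !qf_sum -big_split /=; apply: eq_bigr => j _.
rewrite -big_split /=; apply: eq_bigr => i _.
rewrite /GRing.scale /=; ring.
Qed.

Lemma qf_contc (R : realType) k (M : 'M[R]_k) : continuous (fun v : 'cV[R]_k => qf v M v).
Proof.
move=> w0.
have -> : (fun v : 'cV[R]_k => qf v M v) = (fun w => \sum_j \sum_i (w i 0 * M i j) * w j 0).
  by apply/funext => w; rewrite qf_sum.
apply: cont_sum => j; apply: cont_sum => i.
apply: (continuousM (s := fun w : 'cV[R]_k => w i 0 * M i j) (t := fun w : 'cV[R]_k => w j 0)); last exact: coord_continuous.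
apply: (continuousM (s := fun w : 'cV[R]_k => w i 0) (t := fun _ => M i j)); first exact: coord_continuous.
exact: cst_continuous.
Qed.

Lemma lyap_stable (R : realType) r n (Omega : set 'rV[R]_r) (Mcl : 'rV[R]_r -> 'M[R]_n)
  (P : 'M[R]_n) (h : R) :
  posdef P -> 0 < h ->
  (forall rho, Omega rho -> forall v,
     qf (Mcl rho *m v) P v + qf v P (Mcl rho *m v) <= - (h * `|v| ^+ 2)) ->
  lpv_asymptotically_stable Omega Mcl.
Proof.
move=> hP hh hD.
have [c hc [C hC hb]] := qf_bounds P.
have lo v : c * `|v| ^+ 2 <= qf v P v by apply: (hb v).1.
have up v : qf v P v <= C * `|v| ^+ 2 by apply: (hb v).2.
have key : forall rho x, lpv_solution Omega Mcl rho x ->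
   [/\ forall t : R, 0 < t -> is_derive t (1:R) (fun s => qf (x s) P (x s))
          (qf (Mcl (rho t) *m x t) P (x t) + qf (x t) P (Mcl (rho t) *m x t)),
       {within `[0, +oo[, continuous (fun s => qf (x s) P (x s))} &
       forall s t : R, 0 <= s -> s <= t -> qf (x t) P (x t) <= qf (x s) P (x s)].
  move=> rho x [hO [hc0 hd]].
  have hder (t : R) : 0 < t -> is_derive t (1:R) (fun s => qf (x s) P (x s))
          (qf (Mcl (rho t) *m x t) P (x t) + qf (x t) P (Mcl (rho t) *m x t)).
    by move=> t0; apply: qf_derive; apply: hd.
  have hcont : {within `[0, +oo[, continuous (fun s => qf (x s) P (x s))}.
    rewrite set_itvcy; apply: (@within_continuous_comp _ _ _ [set t : R | (0 <= t)%O] x (fun v => qf v P v)) => //.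
    by move=> v _; apply: qf_contc.
  split => // s t s0 st.
  apply: (@ler0_derive1_nincry R (fun s => qf (x s) P (x s)) 0) => //.
    by move=> u; rewrite in_itv /= andbT => u0; have [] := hder u u0.
  move=> u; rewrite in_itv /= andbT => u0.
  have := hder u u0 => hdu; rewrite derive1E derive_val.
  apply: le_trans (hD _ (hO u (ltW u0)) _) _.
  by rewrite oppr_le0 mulr_ge0 // ?ltW // exprn_ge0.
split.
  move=> e he.
  set k := Num.min 1 (c / C).
  have k0 : 0 < k by rewrite lt_min ltr01 divr_gt0.
  have k1 : k <= 1 by rewrite ge_min lexx.
  have kc : k <= c / C by rewrite ge_min lexx orbT.
  have kC : C * k <= c.
    by have := ler_wpM2l (ltW hC) kc; rewrite mulrCA mulfV ?gt_eqF // mulr1.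
  exists (e * k); first exact: mulr_gt0.
  move=> rho x hsol hx0 t t0.
  have [_ _ hmono] := key rho x hsol.
  have h1 := le_trans (lo (x t)) (le_trans (hmono 0 t (lexx 0) t0) (up (x 0))).
  have n0 := normr_ge0 (x 0); have nt := normr_ge0 (x t).
  have : `|x t| ^+ 2 < e ^+ 2.
    rewrite -(ltr_pM2l hc); apply: le_lt_trans h1 _.
    have : `|x 0| ^+ 2 < (e * k) ^+ 2 by rewrite ltr_pXn2r // ?nnegrE // ltW // mulr_gt0.
    move=> h2.
    have h3 : C * `|x 0| ^+ 2 < C * (e * k) ^+ 2 by rewrite ltr_pM2l.
    apply: lt_le_trans h3 _.
    have e2 : 0 <= e ^+ 2 by rewrite exprn_ge0 // ltW.
    have h4 : C * k * (k * e ^+ 2) <= c * (k * e ^+ 2) by apply: ler_wpM2r => //; rewrite mulr_ge0 // ltW.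
    have h5 : c * (k * e ^+ 2) <= c * e ^+ 2.
      apply: ler_wpM2l; first exact: ltW.
      by rewrite -[leRHS]mul1r; apply: ler_wpM2r.
    rewrite exprMn; apply: le_trans h5; apply: le_trans h4; rewrite le_eqVlt; apply/orP; left; apply/eqP.
    by rewrite expr2; ring.
  by rewrite ltr_pXn2r // ?nnegrE // ltW.
move=> rho x hsol.
have [hder hcont hmono] := key rho x hsol.
have [hO _] := hsol.
set V := fun s => qf (x s) P (x s).
apply/cvgrPdist_lt => eps heps.
set eta := c * eps ^+ 2.
have heta : 0 < eta by rewrite mulr_gt0 // exprn_gt0.
have [T [hT0 hVT]] : exists T, 0 <= T /\ V T < eta.
  case: (pselect (exists T, 0 <= T /\ V T < eta)) => // hno; exfalso.
  have hge t : 0 <= t -> eta <= V t.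
    by move=> t0; rewrite leNgt; apply/negP => hlt; apply: hno; exists t.
  set g := h * eta / C.
  have hg : 0 < g by rewrite divr_gt0 // mulr_gt0.
  have Gder (t : R) : 0 < t -> is_derive t (1:R) (fun s => V s + g * s)
      (qf (Mcl (rho t) *m x t) P (x t) + qf (x t) P (Mcl (rho t) *m x t) + g).
    move=> t0.
    have hlin : is_derive t (1:R) (fun s : R => g * s) g.
      have h1 := is_deriveZ g (is_derive_id t (1:R)).
      by apply: is_derive_eq h1 _; rewrite /GRing.scale /= mulr1.
    exact: is_deriveD (hder t t0) hlin.
  have Gcont : {within `[0, +oo[, continuous (fun s => V s + g * s)}.
    apply: (@within_continuousD _ _ _ _ V (fun s => g * s)) => //.
    by apply: continuous_subspaceT; exact: mulrl_continuous.
  have Gmono (t : R) : 0 <= t -> V t + g * t <= V 0 + g * 0.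
    move=> t0.
    apply: (@ler0_derive1_nincry R (fun s => V s + g * s) 0) => //.
      by move=> u; rewrite in_itv /= andbT => u0; have [] := Gder u u0.
    move=> u; rewrite in_itv /= andbT => u0.
    have := Gder u u0 => hdu; rewrite derive1E derive_val.
    have hDu := hD _ (hO u (ltW u0)) (x u).
    have hVu : eta <= C * `|x u| ^+ 2 := le_trans (hge u (ltW u0)) (up (x u)).
    have : g <= h * `|x u| ^+ 2.
      rewrite /g ler_pdivrMr // -mulrA; apply: ler_wpM2l; first exact: ltW.
      by rewrite mulrC.
    lra.
  set t1 := V 0 / g + 1.
  have Vge s : 0 <= V s := le_trans (mulr_ge0 (ltW hc) (exprn_ge0 2 (normr_ge0 _))) (lo (x s)).
  have t10 : 0 <= t1 by rewrite addr_ge0 // divr_ge0 // ltW.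
  have := Gmono t1 t10; have := hge t1 t10.
  have ht1 : g * t1 = V 0 + g.
    rewrite /t1 mulrDr mulrCA mulfV ?mulr1 //; exact: lt0r_neq0.
  rewrite ht1 mulr0 addr0 => h1 h2.
  have : V t1 <= - g by lra.
  lra.
near=> t.
have hTt : T <= t by near: t; apply: nbhs_pinfty_ge; exact: num_real.
rewrite sub0r normrN.
have h1 : c * `|x t| ^+ 2 < c * eps ^+ 2.
  apply: le_lt_trans (lo (x t)) _; apply: le_lt_trans hVT; exact: hmono.
rewrite ltr_pM2l // in h1.
by rewrite -(ltr_pXn2r (n := 2)) // ?nnegrE // ltW.
Unshelve. all: by end_near.
Qed.


Unset Implicit Arguments.

Theorem theorem1 (R : realType) (r n npi m p : nat)
  (Omega : set 'rV[R]_r) (vtx : 'I_(2 ^ r) -> 'rV[R]_r)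
  (alpha : 'rV[R]_r -> 'I_(2 ^ r) -> R)
  (Halpha : forall rho, Omega rho ->
     (forall i, 0 <= alpha rho i) /\ \sum_i alpha rho i = 1 /\
     rho = ccomb (alpha rho) vtx)
  (A : 'rV[R]_r -> 'M[R]_n) (B : 'rV[R]_r -> 'M[R]_(n, m))
  (C : 'rV[R]_r -> 'M[R]_(p, n))
  (A1 : 'M[R]_n) (A2 : 'M[R]_(n, npi)) (A3 : 'M[R]_(n, m))
  (C1 : 'M[R]_(p, n)) (C2 : 'M[R]_(p, npi))
  (U1 : 'rV[R]_r -> 'M[R]_(npi, n)) (U2 : 'rV[R]_r -> 'M[R]_npi)
  (U3 : 'rV[R]_r -> 'M[R]_(npi, m))
  (hU1 : affine_in U1) (hU2 : affine_in U2) (hU3 : affine_in U3)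
  (hU2inv : forall rho, Omega rho -> U2 rho \in unitmx)
  (hexact : forall rho, Omega rho ->
     forall (x : 'cV[R]_n) (pi : 'cV[R]_npi) (u : 'cV[R]_m),
       U1 rho *m x + U2 rho *m pi + U3 rho *m u = 0 ->
       A1 *m x + A2 *m pi + A3 *m u = A rho *m x + B rho *m u /\
       C1 *m x + C2 *m pi = C rho *m x)
  (beta : R)
  (P : 'M[R]_n) (H : 'I_(2 ^ r) -> 'M[R]_n) (Rm : 'M[R]_m)
  (Q : 'I_(2 ^ r) -> 'M[R]_p) (S : 'I_(2 ^ r) -> 'M[R]_(p, m))
  (L : 'M[R]_(n + (npi + m), npi))
  (hP : posdef P) (hH : forall i, posdef (H i)) (hR : posdef Rm)
  (hQ : forall i, (Q i)^T = Q i)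
  (hLMI1 : forall i,
     let Cd := row_mx (U1 (vtx i)) (row_mx (U2 (vtx i)) (U3 (vtx i))) in
     let Y11 := P *m A1 + A1^T *m P - C1^T *m Q i *m C1 + H i in
     let Y21 := (P *m A2 - C1^T *m Q i *m C2)^T in
     let Y31 := (P *m A3 - C1^T *m S i)^T in
     let Y22 := - (C2^T *m Q i *m C2) in
     let Y32 := - ((S i)^T *m C2) in
     let Y33 := - Rm in
     let Y := block_mx Y11 (row_mx Y21^T Y31^T)
                       (col_mx Y21 Y31) (block_mx Y22 Y32^T Y32 Y33) in
     negdef (Y + L *m Cd + Cd^T *m L^T))
  (hLMI2 : forall i,
     let Xd := block_mx (Q i) (S i) (S i)^T Rm in
     let Cs := row_mx (S i)^T Rm in
     let Ls := (row_mx (const_mx beta : 'M[R]_(m, p)) (- 1%:M))^T in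
     negdef (Xd + Ls *m Cs + Cs^T *m Ls^T)) :
  let Hr rho := ccomb (alpha rho) H in
  let Qr rho := ccomb (alpha rho) Q in
  let Sr rho := ccomb (alpha rho) S in
  let K rho := ccomb (alpha rho) (fun i => - (invmx Rm *m (S i)^T)) in
  robust_strict_QSR_dissipative Omega A1 A2 A3 C1 C2 U1 U2 U3 P Hr Qr Sr Rm /\
  lpv_asymptotically_stable Omega (fun rho => A rho + B rho *m K rho *m C rho).
Proof.
move=> Hr Qr Sr K.
have hPs : P^T = P by case: hP.
have hRs : Rm^T = Rm by case: hR.
have hdis := dissip Halpha hU1 hU2 hU3 hPs hQ hLMI1.
split; first exact: hdis.
have hHb i : exists2 c, 0 < c & forall v : 'cV[R]_n, c * `|v| ^+ 2 <= qf v (H i) v.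
  have [c hc [C0 _ hb]] := qf_bounds (H i).
  by exists c => // v; apply: (hb v).1.
pose ch i := s2val (cid2 (hHb i)).
have ch0 i : 0 < ch i := s2valP (cid2 (hHb i)).
have chb i v : ch i * `|v| ^+ 2 <= qf v (H i) v := s2valP' (cid2 (hHb i)) v.
set h := \big[Order.min/1]_i ch i.
have h0 : 0 < h by rewrite /h; elim/big_ind: _ => // a b ha hb; rewrite lt_min ha hb.
have hle i : h <= ch i by exact: bigmin_le.
apply: (@lyap_stable R r n Omega _ P h hP h0) => rho hrho v.
have [ha [hs hr]] := Halpha rho hrho.
set u := K rho *m (C rho *m v).
set pi := - (invmx (U2 rho) *m (U1 rho *m v + U3 rho *m u)).
have hcon : U1 rho *m v + U2 rho *m pi + U3 rho *m u = 0.
  rewrite /pi mulmxN mulmxA mulmxV ?mul1mx ?hU2inv //.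
  by rewrite opprD addrA addrN add0r addNr.
have [hAx hCx] := hexact rho hrho v pi u hcon.
have hd := hdis rho hrho v pi u hcon; cbv zeta in hd.
rewrite hAx hCx in hd.
have hsup : qf (C rho *m v) (ccomb (alpha rho) Q) (C rho *m v) +
    2 * qf (C rho *m v) (ccomb (alpha rho) S) u + qf u Rm u <= 0
  := supply_neg ha hs hR hLMI2 (C rho *m v).
have hD : qf ((A rho + B rho *m K rho *m C rho) *m v) P v +
    qf v P ((A rho + B rho *m K rho *m C rho) *m v)
    = qf ((P + P^T) *m v) 1%:M (A rho *m v + B rho *m u).
  rewrite /u mulmxDl -!mulmxA !qfE mul1mx mulmxDl ipDl.
  rewrite [in RHS]ipDl [ip (P^T *m v) _]ip_mull trmxK [ip (P *m v) _]ipC.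
  by rewrite -ipDl.
have hHh : h * `|v| ^+ 2 <= qf v (ccomb (alpha rho) H) v.
  rewrite qf_ccomb -[h * _]mul1r -hs mulr_suml; apply: ler_sum => i _.
  apply: ler_wpM2l; first exact: ha.
  apply: le_trans (chb i v); apply: ler_wpM2r; [exact: exprn_ge0 | exact: hle].
rewrite hD; lra.
Qed.
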